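(* Let $\mathcal{N}$ be a Beeping Network with $n$ nodes and maximum degree $\Delta$, where each node has a unique ID from $[1,n^c]$ for a constant $c\ge1$ and each node knows $n$, $c$ and $\Delta$. Then the Maximal Independent Set problem can be solved deterministically on $\mathcal{N}$ in $O(\Delta^2\,\mathrm{polylog}\, n)$ beeping rounds.
   Context: A Beeping Network is a network of $n$ nodes whose topology is an undirected graph $G=(V,E)$. Time is divided into synchronous rounds and all nodes start simultaneously. In each round every node either beeps or listens; a listening node hears ''silence'' if no neighbor beeps and ''noise'' if at least one neighbor beeps, and cannot distinguish one beep from several. An independent set is $S\subseteq V$ with no edge between any two of its nodes; it is maximal if it is not contained in a larger independent set. The Maximal Independent Set problem is solved when, for some maximal independent set $S$, every node of $S$ knows that it is in $S$. *)

(* Defs.v *)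
From mathcomp Require Import all_boot all_order.
Set Implicit Arguments. Unset Strict Implicit. Unset Printing Implicit Defensive.

(* A simple graph on the n nodes 'I_n: symmetric irreflexive relation. *)
Definition max_degree n (adj : rel 'I_n) : nat :=
  \max_(v : 'I_n) #|[set u | adj v u]|.

Definition independent n (adj : rel 'I_n) (S : {set 'I_n}) : Prop :=
  forall u v, u \in S -> v \in S -> ~~ adj u v.

Definition is_MIS n (adj : rel 'I_n) (S : {set 'I_n}) : Prop :=
  independent adj S /\
  forall S', independent adj S' -> S \subset S' -> S' = S.

(* Every node runs the same algorithm;
   its only inputs are n, Delta (c is fixed outside), its own ID, and the
   sequence of its observations so far (true = heard noise while listening;
   false = silence, or the node beeped itself).  [b_rounds n Delta] is the
   number of rounds run; afterwards [b_out] is the node's MIS-membership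
   decision. *)
Record beep_alg := BeepAlg {
  b_rounds : nat -> nat -> nat;
  b_act : nat -> nat -> nat -> seq bool -> bool; (* true = beep *)
  b_out : nat -> nat -> nat -> seq bool -> bool
}.

Fixpoint history (A : beep_alg) n (adj : rel 'I_n) (id : 'I_n -> nat)
    (Delta : nat) (t : nat) : 'I_n -> seq bool :=
  match t with
  | 0 => fun _ => [::]
  | t'.+1 =>
      let h := history A adj id Delta t' in
      fun v => rcons (h v)
        (if b_act A n Delta (id v) (h v) then false
         else [exists u, adj v u && b_act A n Delta (id u) (h u)])
  end.

Definition output_set (A : beep_alg) n (adj : rel 'I_n) (id : 'I_n -> nat)
    (Delta : nat) : {set 'I_n} :=
  [set v | b_out A n Delta (id v) (history A adj id Delta (b_rounds A n Delta) v)].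

(* Main.v *)
Require Import Defs.
From mathcomp Require Import all_boot all_order.
From mathcomp Require Import all_algebra all_field.
From mathcomp Require Import zify.
Set Implicit Arguments. Unset Strict Implicit. Unset Printing Implicit Defensive.
Import GRing.Theory.

Section Alg.
Variable c : nat.

Definition LL n := (trunc_log 2 n).+1.
Definition RR n := c * LL n.
Definition kk n D := (trunc_log 2 (D * RR n)).+1.
Definition Fld n D : finFieldType := s2val (@pPrimePowerField 2 (kk n D) (isT : prime 2) (ltn0Sn _)).
Definition EE n D : finType := (Fld n D * Fld n D)%type.
Definition mm n D := #|EE n D|.
Definition T1 n D := mm n D * RR n * 2.
Definition Tot n D := T1 n D + mm n D.
Definition bitn i x := odd (x %/ 2 ^ i).
Definition Pv n D x (a : Fld n D) : Fld n D := (\sum_(i < RR n) (bitn i x)%:R * a ^+ i)%R.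
Definition inB n D x (e : EE n D) := Pv x e.1 == e.2.
Definition code n D (e : EE n D) (i : nat) (b : bool) := ((enum_rank e * RR n + i) * 2 + b)%N.
Definition act1 n D x t := [exists e : EE n D, exists i : 'I_(RR n), (t == code e i (bitn i x)) && inB x e].
Definition priv n D x (h : seq bool) (e : EE n D) := inB x e && ~~ [exists i : 'I_(RR n), nth false h (code e i (~~ bitn i x))].
Definition col n D x h := find (@priv n D x h) (enum (EE n D)).
Definition act n D x h :=
  let t := size h in
  if t < T1 n D then act1 n D x t
  else if t < Tot n D then (col n D x h == t - T1 n D) && ~~ (true \in drop (T1 n D) h)
  else false.
Definition out n D x h := (col n D x h < mm n D) && ~~ (true \in take (col n D x h) (drop (T1 n D) h)).
Definition alg := BeepAlg Tot act out.
End Alg.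
Section Hist.
Variables (c n D : nat) (adj : rel 'I_n) (id : 'I_n -> nat).
Local Notation H t v := (history (alg c) adj id D t v).

Lemma size_hist t v : size (H t v) = t.
Proof. by elim: t v => [|t IH] v //=; rewrite size_rcons IH. Qed.

Lemma hist_take t T v : t <= T -> H t v = take t (H T v).
Proof.
elim: T => [|T IH]; first by rewrite leqn0 => /eqP ->.
rewrite leq_eqVlt => /orP [/eqP ->| ltT]; first by rewrite take_oversize ?size_hist.
rewrite /= -cats1 takel_cat ?size_hist //; exact: IH.
Qed.

Lemma hist_nth t T v : t < T -> nth false (H T v) t =
  (if act c n D (id v) (H t v) then false
   else [exists u, adj v u && act c n D (id u) (H t u)]).
Proof.
move=> ltT; rewrite -(nth_take false (ltnSn t)) -hist_take //=.
by rewrite nth_rcons size_hist ltnn eqxx.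
Qed.
End Hist.
Lemma bits_inj R x y : x < 2 ^ R -> y < 2 ^ R ->
  (forall i, i < R -> bitn i x = bitn i y) -> x = y.
Proof.
elim: R x y => [|R IH] x y.
  by rewrite expn0 !ltnS !leqn0 => /eqP -> /eqP ->.
move=> hx hy hb.
have e0 : odd x = odd y by have := hb 0 isT; rewrite /bitn expn0 !divn1.
have eh : x./2 = y./2.
  apply: IH; first by rewrite -divn2 ltn_divLR // -expnSr.
    by rewrite -divn2 ltn_divLR // -expnSr.
  move=> i ltiR; have := hb i.+1 ltiR.
  by rewrite /bitn !expnS !divnMA !divn2.
by rewrite -(odd_double_half x) -(odd_double_half y) e0 eh.
Qed.

Section Codes.
Variables (c n D : nat).

Lemma code_lt (e : EE c n D) i b : i < RR c n -> code e i b < T1 c n D.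
Proof.
move=> hi; rewrite /code /T1.
have he : enum_rank e < mm c n D := ltn_ord _.
have : enum_rank e * RR c n + i < mm c n D * RR c n.
  apply: (@leq_trans ((enum_rank e).+1 * RR c n)); first by rewrite mulSn; lia.
  by rewrite leq_mul2r he orbT.
case: b => /=; lia.
Qed.

Lemma code_inj (e e' : EE c n D) i i' b b' : i < RR c n -> i' < RR c n ->
  code e i b = code e' i' b' -> [/\ e = e', i = i' & b = b'].
Proof.
move=> hi hi'; rewrite /code => h.
have hb : b = b'.
  by move: h; case: b; case: b' => //=; lia.
move: h; rewrite -hb => /addIn => /eqP; rewrite eqn_mul2r /= => /eqP h.
have hm := congr1 (modn^~ (RR c n)) h; have hd := congr1 (divn^~ (RR c n)) h.
rewrite /= !modnMDl !modn_small // in hm.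
have hp : 0 < RR c n by case: (RR c n) hi.
rewrite /= !divnMDl // !divn_small // !addn0 in hd.
by split=> //; apply: enum_rank_inj; apply: val_inj.
Qed.
End Codes.
Section Field.
Variables (c n D : nat).
Local Notation F := (Fld c n D).
Import GRing.Theory.
Local Open Scope ring_scope.

Lemma card_F : #|F| = (2 ^ kk c n D)%N.
Proof. exact: s2valP' (@pPrimePowerField 2 (kk c n D) (isT : prime 2) (ltn0Sn _)). Qed.

Lemma roots_lt x y i : (i < RR c n)%N -> bitn i x != bitn i y ->
  (#|[set a : F | Pv x a == Pv y a]| < RR c n)%N.
Proof.
move=> hi hne.
pose p : {poly F} := \poly_(j < RR c n) ((bitn j x)%:R - (bitn j y)%:R).
have hp a : p.[a] = Pv x a - Pv y a.
  rewrite horner_poly /Pv -sumrB; apply: eq_bigr => j _; by rewrite mulrBl.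
have p0 : p != 0.
  apply/eqP => /(congr1 (fun q : {poly F} => q`_i)); rewrite coef_poly hi coef0.
  move/eqP; rewrite subr_eq0.
  by case: (bitn i x) (bitn i y) hne => [] [] //= _; rewrite ?oner_eq0 // eq_sym oner_eq0.
rewrite cardE; apply: leq_trans (size_poly _ _).
apply: (max_poly_roots p0 _ (enum_uniq _)).
by apply/allP => a; rewrite mem_enum inE => /eqP h; rewrite /root hp h subrr.
Qed.
End Field.
Lemma card_bigcup_le (I T : finType) (A : {pred I}) (B : I -> {set T}) :
  #|\bigcup_(i in A) B i| <= \sum_(i in A) #|B i|.
Proof.
elim/big_rec2: _ => [|i X s _ ih]; first by rewrite cards0.
by rewrite cardsU (leq_trans (leq_subr _ _)) // leq_add2l.
Qed.

Section Main.
Variables (c : nat) (hc : 0 < c) (n D : nat) (adj : rel 'I_n) (id : 'I_n -> nat).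
Hypotheses (hsym : symmetric adj) (hirr : irreflexive adj)
  (hD : max_degree adj = D) (hinj : injective id)
  (hid : forall v, 1 <= id v <= n ^ c).

Local Notation H t v := (history (alg c) adj id D t v).
Local Notation R := (RR c n).
Local Notation TT := (T1 c n D).
Local Notation m := (mm c n D).
Local Notation hf v := (H (Tot c n D) v).
Local Notation colv v := (col c n D (id v) (hf v)).

Lemma id_lt v : id v < 2 ^ R.
Proof.
have /andP [_ h] := hid v.
apply: (leq_ltn_trans h); rewrite /RR mulnC expnM ltn_exp2r //.
exact: trunc_log_ltn.
Qed.

Lemma bits_differ u v : u != v -> exists2 i, i < R & bitn i (id u) != bitn i (id v).
Proof.
move=> huv.
case: (boolP [exists i : 'I_R, bitn i (id u) != bitn i (id v)]) => [/existsP [i hi]|/existsPn hall].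
  by exists i.
exfalso; move/eqP: huv; apply; apply: hinj.
apply: (bits_inj (id_lt u) (id_lt v)) => i hi.
by have := hall (Ordinal hi); rewrite negbK => /eqP.
Qed.

Lemma TT_le_Tot : TT <= Tot c n D.
Proof. exact: leq_addr. Qed.

Lemma obs1 (e : EE c n D) (i : nat) v : i < R ->
  nth false (hf v) (code e i (~~ bitn i (id v))) =
  [exists u, adj v u && (inB (id u) e && (bitn i (id u) == ~~ bitn i (id v)))].
Proof.
move=> hi; have ht := code_lt e (~~ bitn i (id v)) hi.
rewrite hist_nth; last exact: leq_trans ht TT_le_Tot.
have -> : act c n D (id v) (H (code e i (~~ bitn i (id v))) v) = false.
  rewrite /act size_hist ht.
  apply/existsP => [[e' /existsP [i' /andP [/eqP h _]]]].
  have [_ hii hb] := code_inj hi (ltn_ord i') h.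
  by move: hb; rewrite -hii; case: (bitn i (id v)).
apply: eq_existsb => u; rewrite /act size_hist ht; congr (_ && _).
apply/existsP/andP.
  move=> [e' /existsP [i' /andP [/eqP h hin]]].
  have [he hii hb] := code_inj hi (ltn_ord i') h.
  by rewrite he hin /=; move: hb; rewrite -hii => <-; rewrite eqxx.
move=> [hin /eqP hb]; exists e; apply/existsP; exists (Ordinal hi).
by rewrite /= -hb eqxx hin.
Qed.

Lemma privE v (e : EE c n D) : priv (id v) (hf v) e = inB (id v) e && ~~ [exists u, adj v u && inB (id u) e].
Proof.
rewrite /priv; congr (_ && ~~ _); apply/existsP/existsP.
  move=> [i]; rewrite obs1 // => /existsP [u /and3P [hadj hin _]].
  by exists u; rewrite hadj hin.
move=> [u /andP [hadj hin]].
have huv : u != v by apply/eqP => huv; move: hadj; rewrite huv hirr.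
have [i hi hne] := bits_differ huv.
exists (Ordinal hi); rewrite obs1 //; apply/existsP; exists u.
rewrite hadj hin /=; move: hne; by case: (bitn i (id u)); case: (bitn i (id v)).
Qed.

Lemma exists_priv v : exists e : EE c n D, priv (id v) (hf v) e.
Proof.
pose Nv := [set u | adj v u].
have hN : #|Nv| <= D by rewrite -hD /max_degree (bigD1 v) //= leq_maxl.
pose Bad := \bigcup_(u in Nv) [set a : Fld c n D | Pv (id u) a == Pv (id v) a].
have hBad : #|Bad| < #|Fld c n D|.
  apply: (leq_ltn_trans (card_bigcup_le _ _)).
  apply: (@leq_ltn_trans (\sum_(u in Nv) R)).
    apply: leq_sum => u hu; apply: ltnW.
    have huv : u != v by apply/eqP => huv; move: hu; rewrite inE huv hirr.
    have [i hi hne] := bits_differ huv.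
    exact: roots_lt hi hne.
  rewrite sum_nat_const card_F.
  apply: (@leq_ltn_trans (D * R)); first by rewrite leq_mul2r hN orbT.
  exact: trunc_log_ltn.
have : 0 < #|~: Bad|.
  by move: (cardsC Bad) hBad => <-; rewrite -{1}(addn0 #|Bad|) ltn_add2l.
rewrite card_gt0 => /set0Pn [a ha].
exists (a, Pv (id v) a); rewrite privE /inB eqxx /=.
apply/existsP => [[u /andP [hadj hin]]].
move: ha; rewrite inE => /bigcupP; apply; exists u; by rewrite ?inE.
Qed.

Lemma colv_lt v : colv v < m.
Proof.
have [e he] := exists_priv v.
rewrite /col /mm cardE -has_find; apply/hasP; exists e => //; exact: mem_enum.
Qed.

Lemma colv_priv v (e0 : EE c n D) :
  priv (id v) (hf v) (nth e0 (enum (EE c n D)) (colv v)).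
Proof.
have [e he] := exists_priv v.
apply: nth_find; apply/hasP; exists e => //; exact: mem_enum.
Qed.

Lemma col_proper u v : adj u v -> colv u != colv v.
Proof.
move=> huv; apply/eqP => heq.
have [e0 _] := exists_priv u.
have hu := colv_priv u e0; have hv := colv_priv v e0.
rewrite heq in hu.
move: hv; rewrite privE => /andP [_ /existsP]; apply.
exists u; rewrite hsym huv /=.
by move: hu; rewrite privE => /andP [].
Qed.

Lemma col_stable t v : TT <= t <= Tot c n D -> col c n D (id v) (H t v) = colv v.
Proof.
move=> /andP [h1 h2]; apply: eq_find => e.
rewrite /priv; congr (_ && ~~ _); apply: eq_existsb => i.
rewrite (hist_take c D adj id v h2) nth_take //.
exact: leq_trans (code_lt _ _ (ltn_ord i)) h1.
Qed.

Definition Dm j v := true \in take j (drop TT (hf v)).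

Lemma beep2 j v : j < m ->
  act c n D (id v) (H (TT + j) v) = (colv v == j) && ~~ Dm j v.
Proof.
move=> hj.
have h1 : TT <= TT + j <= Tot c n D by rewrite leq_addr /= leq_add2l ltnW.
rewrite /act size_hist ltnNge leq_addr /= ltn_add2l hj col_stable // addKn.
rewrite /Dm take_drop addnC -(hist_take c D adj id v) // addnC; by case/andP: h1.
Qed.

Lemma DmP j v : j <= m -> Dm j v = [exists j' : 'I_j, nth false (hf v) (TT + j')].
Proof.
move=> hj.
have hs : size (drop TT (hf v)) = m by rewrite size_drop size_hist /Tot addKn.
apply/(nthP false)/existsP.
  move=> [k]; rewrite size_takel ?hs // => hk.
  by rewrite nth_take // nth_drop => h; exists (Ordinal hk); rewrite h.
move=> [k hk]; exists k; first by rewrite size_takel ?hs.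
by rewrite nth_take // nth_drop hk.
Qed.

Lemma obs2 j v : j < m -> nth false (hf v) (TT + j) =
  (if act c n D (id v) (H (TT + j) v) then false
   else [exists u, adj v u && act c n D (id u) (H (TT + j) u)]).
Proof. by move=> hj; rewrite hist_nth // /Tot ltn_add2l. Qed.

Lemma inS v : (v \in output_set (alg c) adj id D) = ~~ Dm (colv v) v.
Proof. by rewrite inE /= /out colv_lt. Qed.

Lemma mis : is_MIS adj (output_set (alg c) adj id D).
Proof.
have key : forall u v, u \in output_set (alg c) adj id D ->
    v \in output_set (alg c) adj id D -> adj u v -> colv u < colv v -> False.
  move=> u v hu hv huv hlt.
  move: hv; rewrite inS DmP ?(ltnW (colv_lt v)) //; apply/negP/negPn/existsP.
  exists (Ordinal hlt); rewrite obs2 ?colv_lt //= beep2 ?colv_lt //.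
  rewrite (gtn_eqF hlt) /=; apply/existsP; exists u.
  by rewrite hsym huv /= beep2 ?colv_lt // eqxx -inS hu.
split.
  move=> u v hu hv; apply/negP => huv.
  case: (ltngtP (colv u) (colv v)) => [hlt|hlt|heq].
  - exact: key hu hv huv hlt.
  - by apply: key hv hu _ hlt; rewrite hsym.
  - by move: (col_proper huv); rewrite heq eqxx.
move=> S' hS' hsub; apply/eqP; rewrite eqEsubset hsub andbT.
apply/subsetP => w hw'; apply/negPn/negP => hw.
move: hw; rewrite inS negbK DmP ?(ltnW (colv_lt w)) // => /existsP [j hj].
have hjm : j < m := ltn_trans (ltn_ord j) (colv_lt w).
move: hj; rewrite obs2 //; case: ifP => // _ /existsP [u /andP [hadj hbu]].
have huS : u \in output_set (alg c) adj id D.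
  move: hbu; rewrite beep2 // => /andP [/eqP hc' hD']; by rewrite inS hc'.
by move: (hS' w u hw' (subsetP hsub u huS)); rewrite hadj.
Qed.
End Main.
Lemma rounds_bound c n D : 0 < c ->
  Tot c n D <= 12 * c ^ 3 * D.+1 ^ 2 * (trunc_log 2 n).+1 ^ 3.
Proof.
move=> hc.
have hR : 0 < RR c n by rewrite /RR /LL muln_gt0 hc.
have hq : 2 ^ trunc_log 2 (D * RR c n) <= D.+1 * RR c n.
  case: (posnP (D * RR c n)) => [->|hpos]; first by rewrite trunc_log0 expn0 mulnC muln_gt0 hR.
  apply: leq_trans (trunc_logP (isT : 1 < 2) hpos) _; by rewrite leq_mul2r leqnSn orbT.
rewrite /Tot /T1 /mm card_prod card_F /kk expnS.
move: hq; set q := 2 ^ _; set R := RR c n => hq.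
have e : 12 * c ^ 3 * D.+1 ^ 2 * (trunc_log 2 n).+1 ^ 3 = 12 * (D.+1 * R) ^ 2 * R.
  by rewrite /R /RR /LL; nia.
rewrite e.
have h2 : 2 * q * (2 * q) <= 4 * (D.+1 * R) ^ 2 by nia.
have h3 : 2 * R + 1 <= 3 * R by lia.
nia.
Qed.

Theorem corollary1 (c : nat) (hc : 1 <= c) :
  exists (A : beep_alg) (C k : nat),
    forall (n Delta : nat) (adj : rel 'I_n) (id : 'I_n -> nat),
      symmetric adj -> irreflexive adj ->
      max_degree adj = Delta ->
      injective id -> (forall v, 1 <= id v <= n ^ c) ->
      b_rounds A n Delta <= C * Delta.+1 ^ 2 * (trunc_log 2 n).+1 ^ k /\
      is_MIS adj (output_set A adj id Delta).
Proof.
exists (alg c), (12 * c ^ 3), 3 => n Delta adj id hsym hirr hD hinj hid.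
split; first exact: rounds_bound.
by apply: mis.
Qed.
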